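(* Let $n\ge 2$ and $m$ be positive integers, $\lambda=(\lambda_1,\dots,\lambda_n)\in\mathcal{P}^m_n$, and $k_{i,j}=k_{i,j}(\lambda)$ ($1\le i\le j\le n$) as defined below. Consider (1) $\lambda^{(1)}=(\lambda_2,\lambda_3,\dots,\lambda_n)$; (2) $\lambda^{(2)}$ with parts $\lambda^{(2)}_i=\lambda_i-k_{i,n}$, $1\le i\le n-1$; (3) $\lambda^{(3)}$ with parts $\lambda^{(3)}_i=\lambda^{(2)}_i-k_{i,n-1}$, $1\le i\le n-2$; (4) $\lambda^{(4)}$ with parts $\lambda^{(4)}_i=\lambda_i-k_{i,n-1}$, $1\le i\le n-1$. Then $\lambda^{(1)},\lambda^{(2)},\lambda^{(4)}\in\mathcal{P}^m_{n-1}$ and $\lambda^{(3)}\in\mathcal{P}^m_{n-2}$. Moreover, writing $k^{(h)}_{i,j}=k_{i,j}(\lambda^{(h)})$ (computed with $n-1$ in place of $n$ for $h\in\{1,2,4\}$, and with $n-2$ in place of $n$ for $h=3$), we have: $k^{(1)}_{i,j}=k_{i+1,j+1}$ for $1\le i\le j\le n-1$; $k^{(2)}_{i,j}=k_{i,j}$ for $1\le i\le j\le n-1$; $k^{(3)}_{i,j}=k_{i,j}$ for $1\le i\le j\le n-2$; $k^{(3)}_{i,j}=k^{(4)}_{i,j}$ for $1\le i\le j\le n-2$; and for $1\le i\le j\le n-1$: $k^{(4)}_{i,j}=k_{i,j+1}$ if $j=n-1$, and $k^{(4)}_{i,j}=k_{i,j}$ if $j\le n-2$.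
   Context: $\mathcal{P}^m_N$ denotes the set of integer partitions $(\mu_1\ge\cdots\ge\mu_N\ge0)$ with $\mu_i\le m(N-i+1)$ for all $i$. For $\mu\in\mathcal{P}^m_N$, integers $k_{i,j}(\mu)$, $1\le i\le j\le N$, are defined recursively (in order of decreasing $i$, and for fixed $i$ decreasing $j$) by $$k_{i,j}(\mu)=\min\left\{m,\left\lceil\frac{\mu_i-\sum_{\ell=j+1}^N k_{i,\ell}(\mu)+\sum_{\ell=i+1}^j k_{\ell,j}(\mu)}{j-i+1}\right\rceil\right\}.$$ *)

(* Defs.v *)
From HB Require Import structures.
From mathcomp Require Import all_boot all_order all_algebra.
From mathcomp Require Import zify.
Set Implicit Arguments. Unset Strict Implicit. Unset Printing Implicit Defensive.
Import Order.TTheory GRing.Theory Num.Theory.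
Local Open Scope ring_scope.

(* Sequences mu_1, ..., mu_N are represented by functions mu : nat -> int,
   1-indexed (values outside 1..N are irrelevant). *)

Definition inP (m N : nat) (mu : nat -> int) : Prop :=
  [/\ (forall i : nat, (1 <= i)%N -> (i < N)%N -> mu i.+1 <= mu i),
      (forall i : nat, (1 <= i <= N)%N -> 0 <= mu i) &
      (forall i : nat, (1 <= i <= N)%N -> mu i <= (m * (N - i + 1))%:Z)].

(* ceiling of a / b for b > 0 (intdiv's %/ is floor division for b > 0) *)
Definition ceil_div (a b : int) : int := - ((- a) %/ b)%Z.

Fixpoint kf (m N : nat) (mu : nat -> int) (f i j : nat) : int :=
  match f with
  | 0%N => 0
  | f'.+1 =>
      Order.min (m%:Z)
        (ceil_div (mu i - (\sum_(j.+1 <= l < N.+1) kf m N mu f' i l)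
                        + (\sum_(i.+1 <= l < j.+1) kf m N mu f' l j))
                  (j - i + 1)%N%:Z)
  end.

(* k_{i,j}(mu) for the parameters m, N; the fuel (N-i)+(N-j)+1 bounds the
   depth of the recursion (see kk_rec below). *)
Definition kk (m N : nat) (mu : nat -> int) (i j : nat) : int :=
  kf m N mu (N - i + (N - j)).+1 i j.

Lemma kf_stable (m N : nat) (mu : nat -> int) (f g i j : nat) :
  (i <= j <= N)%N -> (N - i + (N - j) < f)%N -> (N - i + (N - j) < g)%N ->
  kf m N mu f i j = kf m N mu g i j.
Proof.
elim: f g i j => [|f IH] [|g] i j /andP[hij hjN] hf hg //=.
congr (Order.min _ (ceil_div (_ - _ + _) _)).
  apply: eq_big_nat => l /andP[h1 h2]; apply: IH; first (apply/andP; split); lia.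
apply: eq_big_nat => l /andP[h1 h2]; apply: IH; first (apply/andP; split); lia.
Qed.

(* The defining recursion of the paper holds for 1 <= i <= j <= N. *)
Lemma kk_rec (m N : nat) (mu : nat -> int) (i j : nat) :
  (1 <= i)%N -> (i <= j)%N -> (j <= N)%N ->
  kk m N mu i j =
  Order.min (m%:Z)
    (ceil_div (mu i - (\sum_(j.+1 <= l < N.+1) kk m N mu i l)
                    + (\sum_(i.+1 <= l < j.+1) kk m N mu l j))
              (j - i + 1)%N%:Z).
Proof.
move=> h1 hij hjN; rewrite {1}/kk /=.
congr (Order.min _ (ceil_div (_ - _ + _) _)).
  apply: eq_big_nat => l /andP[h3 h4].
  transitivity (kf m N mu (N - i + (N - l)).+1 i l); last by [].
  apply: kf_stable; first (apply/andP; split); lia.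
apply: eq_big_nat => l /andP[h3 h4].
transitivity (kf m N mu (N - l + (N - j)).+1 l j); last by [].
apply: kf_stable; first (apply/andP; split); lia.
Qed.

(* Main.v *)
Require Import Defs.
From HB Require Import structures.
From mathcomp Require Import all_boot all_order all_algebra zify.
Import Order.TTheory GRing.Theory Num.Theory.
Local Open Scope ring_scope.

Lemma cdiv_ge (a b : int) : 0 < b -> a <= b * ceil_div a b.
Proof. rewrite /ceil_div => hb. nia. Qed.
Lemma cdiv_lt (a b : int) : 0 < b -> b * ceil_div a b < a + b.
Proof. rewrite /ceil_div => hb. nia. Qed.

Lemma mcb (mm X q v : int) : 0 < q -> v = Order.min mm (ceil_div X q) ->
  [/\ v <= mm, q * v < X + q, (v < mm -> X <= q * v) & (v = mm -> q * (mm - 1) < X)].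
Proof.
move=> hq ->; have h1 := cdiv_ge X q hq; have h2 := cdiv_lt X q hq.
set C := ceil_div X q in h1 h2 *.
have hv : Order.min mm C <= C by lia.
have hv2 : Order.min mm C <= mm by lia.
set w := Order.min mm C in hv hv2 *.
have hqw : q * w <= q * C by rewrite ler_pM2l.
split => //.
- lia.
- move=> h; have -> : w = C by rewrite /w; lia. lia.
- move=> h; have : mm <= C by rewrite /w in h; lia. nia.
Qed.

Lemma mceq (mm X q v : int) : 0 < q ->
  (v = mm /\ q * (mm - 1) < X) \/ [/\ v <= mm, q * (v - 1) < X & X <= q * v] ->
  Order.min mm (ceil_div X q) = v.
Proof.
move=> hq H; have h1 := cdiv_ge X q hq; have h2 := cdiv_lt X q hq.
set C := ceil_div X q in h1 h2 *.
case: H => [[-> h]|[h3 h4 h5]].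
- have : mm <= C by nia. lia.
- have : C = v by nia. lia.
Qed.

Lemma arith_capped (p m lam A B b d : int) : 0 < p -> 0 <= A - B - (p-1) * d ->
  (p+1) * m <= lam + A + d + p -> p * b <= lam - m + B + p - 1 -> p * (m-1) < lam - b + A.
Proof. move=> *. nia. Qed.

Lemma arith_unc (p a lam A B b d : int) : 0 < p -> 0 <= A - B - (p-1) * d <= p - 1 ->
  lam + A + d <= (p+1) * a <= lam + A + d + p -> lam - a + B <= p * b <= lam - a + B + p - 1 ->
  [/\ 0 <= a - b - d <= 1, p * (a-1) < lam - b + A & lam - b + A <= p * a].
Proof. move=> hp h1 h2 h3.
have he : -p < p * (a-b-d) < 2 * p by nia.
have /andP[e0 e1] : 0 <= a - b - d <= 1 by nia.
split; first by lia.
all: case: (boolP (a - b - d == 0)) => /eqP h; [have ha : a = b + d by lia | have ha : a = b + d + 1 by lia]; rewrite ha in h1 h2 h3 *; nia.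
Qed.

Lemma kk_ind (N : nat) (P : nat -> nat -> Prop) :
  (forall i j, (1 <= i)%N -> (i <= j)%N -> (j <= N)%N ->
     (forall i' j', (1 <= i')%N -> (i' <= j')%N -> (j' <= N)%N ->
        (N - i' + (N - j') < N - i + (N - j))%N -> P i' j') -> P i j) ->
  forall i j, (1 <= i)%N -> (i <= j)%N -> (j <= N)%N -> P i j.
Proof.
move=> H.
suff S : forall s i j, (1 <= i)%N -> (i <= j)%N -> (j <= N)%N -> (N - i + (N - j) < s)%N -> P i j.
  by move=> i j h1 h2 h3; apply: (S (N - i + (N - j)).+1).
elim=> [|s IH] i j h1 h2 h3 hs; first by [].
apply: H => // i' j' h1' h2' h3' hl; apply: IH => //; lia.
Qed.

Lemma down_ind (N : nat) (P : nat -> Prop) :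
  (forall i, (1 <= i <= N)%N -> (forall l, (i < l <= N)%N -> P l) -> P i) ->
  forall i, (1 <= i <= N)%N -> P i.
Proof.
move=> H.
suff S : forall s i, (1 <= i <= N)%N -> (N - i < s)%N -> P i.
  by move=> i hi; apply: (S (N - i).+1).
elim=> [|s IH] i hi hs; first by [].
apply: H => // l hl; apply: IH; lia.
Qed.

Lemma col_rec m N mu i : (1 <= i <= N)%N ->
  kk m N mu i N = Order.min m%:Z
    (ceil_div (mu i + \sum_(i.+1 <= l < N.+1) kk m N mu l N) (N - i + 1)%N%:Z).
Proof.
move=> /andP[h1 h2]; rewrite kk_rec // big_geq // subr0 //.
Qed.

Lemma kk_ext m N (f g : nat -> int) :
  (forall l, (1 <= l <= N)%N -> f l = g l) ->
  forall i j, (1 <= i)%N -> (i <= j)%N -> (j <= N)%N -> kk m N f i j = kk m N g i j.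
Proof.
move=> hfg; apply: kk_ind => i j h1 h2 h3 IH.
rewrite (@kk_rec m N f i j) // (@kk_rec m N g i j) // hfg; last lia.
congr (Order.min _ (ceil_div (_ - _ + _) _)).
  apply: eq_big_nat => l hl; apply: IH; lia.
apply: eq_big_nat => l hl; apply: IH; lia.
Qed.

Lemma kk_drop m N mu :
  forall i j, (1 <= i)%N -> (i <= j)%N -> (j <= N)%N ->
  kk m N (fun l => mu l - kk m N.+1 mu l N.+1) i j = kk m N.+1 mu i j.
Proof.
apply: kk_ind => i j h1 h2 h3 IH.
rewrite kk_rec // [RHS]kk_rec //; last lia.
rewrite (big_nat_recr N.+1) /=; last lia.
have -> : (\sum_(j.+1 <= l < N.+1) kk m N (fun l => mu l - kk m N.+1 mu l N.+1) i l)
   = \sum_(j.+1 <= l < N.+1) kk m N.+1 mu i l.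
  apply: eq_big_nat => l hl; apply: IH; lia.
have -> : (\sum_(i.+1 <= l < j.+1) kk m N (fun l => mu l - kk m N.+1 mu l N.+1) l j)
   = \sum_(i.+1 <= l < j.+1) kk m N.+1 mu l j.
  apply: eq_big_nat => l hl; apply: IH; lia.
congr (Order.min _ (ceil_div _ _)). rewrite opprD addrA; congr (_ + _); rewrite addrAC. done.
Qed.

Lemma kk_shift m N mu :
  forall i j, (1 <= i)%N -> (i <= j)%N -> (j <= N)%N ->
  kk m N (fun l => mu l.+1) i j = kk m N.+1 mu i.+1 j.+1.
Proof.
apply: kk_ind => i j h1 h2 h3 IH.
rewrite kk_rec // [RHS]kk_rec ?ltnS //.
have -> : (\sum_(j.+1 <= l < N.+1) kk m N (fun l => mu l.+1) i l)
   = \sum_(j.+2 <= l < N.+2) kk m N.+1 mu i.+1 l.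
  rewrite -[j.+2]addn1 -[N.+2]addn1 big_addn addnK.
  apply: eq_big_nat => l hl; rewrite IH; [by rewrite addn1| lia..].
have -> : (\sum_(i.+1 <= l < j.+1) kk m N (fun l => mu l.+1) l j)
   = \sum_(i.+2 <= l < j.+2) kk m N.+1 mu l j.+1.
  rewrite -[i.+2]addn1 -[j.+2]addn1 big_addn addnK.
  apply: eq_big_nat => l hl; rewrite IH; [by rewrite addn1| lia..].
by rewrite subSS.
Qed.

Lemma cdiv_le (a b c : int) : 0 < b -> a <= b * c -> ceil_div a b <= c.
Proof. move=> hb h; have := cdiv_lt a b hb; nia. Qed.
Lemma cdiv_gt (a b c : int) : 0 < b -> b * (c - 1) < a -> c <= ceil_div a b.
Proof. move=> hb h; have := cdiv_ge a b hb; nia. Qed.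

Lemma sum_ge0_nat a b (F : nat -> int) :
  (forall l, (a <= l < b)%N -> 0 <= F l) -> 0 <= \sum_(a <= l < b) F l.
Proof. move=> H; rewrite big_nat; apply: sumr_ge0 => l /H //. Qed.

Lemma sum_le_const a b (F : nat -> int) c :
  (forall l, (a <= l < b)%N -> F l <= c) -> \sum_(a <= l < b) F l <= c * (b - a)%N%:Z.
Proof. move=> H; apply: le_trans (ler_sum_nat H) _; rewrite sumr_const_nat; lia. Qed.

Lemma sum_ge_const a b (F : nat -> int) c :
  (forall l, (a <= l < b)%N -> c <= F l) -> c * (b - a)%N%:Z <= \sum_(a <= l < b) F l.
Proof. move=> H; apply: le_trans _ (ler_sum_nat H); rewrite sumr_const_nat; lia. Qed.

Lemma sum_le_sum a b (F G : nat -> int) :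
  (forall l, (a <= l < b)%N -> F l <= G l) -> \sum_(a <= l < b) F l <= \sum_(a <= l < b) G l.
Proof. exact: ler_sum_nat. Qed.

Lemma inP_mono m N mu : inP m N mu ->
  forall i l, (1 <= i)%N -> (i <= l)%N -> (l <= N)%N -> mu l <= mu i.
Proof.
move=> [hm _ _] i; elim=> [|l IH] hi hil hlN; first lia.
case: (ltnP i l.+1) => h.
  apply: le_trans (hm l _ _) (IH _ _ _); lia.
have -> : l.+1 = i by lia. by [].
Qed.

Lemma inP_ext m N (f g : nat -> int) :
  (forall l, (1 <= l <= N)%N -> f l = g l) -> inP m N f -> inP m N g.
Proof.
move=> hfg [h1 h2 h3]; split.
- move=> i hi hiN; rewrite -!hfg; [exact: h1 | lia | lia].
- move=> i hi; rewrite -hfg //; exact: h2.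
- move=> i hi; rewrite -hfg //; exact: h3.
Qed.

Section Col.
Variables (m N : nat) (mu : nat -> int).
Hypothesis hP : inP m N mu.
Local Notation c l := (kk m N mu l N).

Lemma col_nn : forall i, (1 <= i <= N)%N -> 0 <= c i <= mu i.
Proof.
apply: down_ind => i hi IH.
rewrite col_rec //.
set T := \sum_(i.+1 <= l < N.+1) _.
have hT0 : 0 <= T by apply: sum_ge0_nat => l hl; have := IH l; lia.
have hTle : T <= mu i * (N.+1 - i.+1)%N%:Z.
  apply: sum_le_const => l hl.
  have := IH l ltac:(lia); have := @inP_mono _ _ _ hP i l ltac:(lia) ltac:(lia) ltac:(lia). lia.
have hmu : 0 <= mu i by case: hP => _ h2 _; apply: h2.
have hq : 0 < (N - i + 1)%N%:Z by lia.
have h1 := cdiv_ge (mu i + T) _ hq.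
have h2 := cdiv_lt (mu i + T) _ hq.
set C := ceil_div _ _ in h1 h2 *.
have : 0 <= C by nia.
have : C <= mu i by rewrite subSS in hTle; nia.
lia.
Qed.

Lemma col_le_m i : c i <= m%:Z.
Proof. rewrite /kk /=. lia. Qed.

Lemma col_split i : (1 <= i)%N -> (i < N)%N ->
  c i = Order.min m%:Z (ceil_div (mu i + (c i.+1 + \sum_(i.+2 <= l < N.+1) c l)) (N - i + 1)%N%:Z)
  /\ c i.+1 = Order.min m%:Z (ceil_div (mu i.+1 + \sum_(i.+2 <= l < N.+1) c l) (N - i)%N%:Z).
Proof.
move=> h1 h2; split.
  rewrite [LHS]col_rec; last by lia.
  by rewrite big_ltn.
rewrite [LHS]col_rec; last lia. congr (Order.min _ (ceil_div _ _)); lia.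
Qed.

Lemma col_mono i : (1 <= i)%N -> (i < N)%N -> c i.+1 <= c i.
Proof.
move=> h1 h2; have [e1 e2] := col_split i h1 h2.
set T := \sum_(i.+2 <= l < N.+1) _ in e1 e2.
have hq : 0 < (N - i + 1)%N%:Z by lia.
have hr : 0 < (N - i)%N%:Z by lia.
have [a1 a2 a3 a4] := mcb _ _ _ _ hr e2.
have hmu := @inP_mono _ _ _ hP i i.+1 h1 (leqnSn i) h2.
rewrite e1; set v := c i.+1 in a1 a2 a3 a4 *.
have : v <= ceil_div (mu i + (v + T)) (N - i + 1)%N%:Z.
  apply: cdiv_gt => //; nia.
lia.
Qed.

Lemma col_lip i : (1 <= i)%N -> (i < N)%N -> c i - c i.+1 <= mu i - mu i.+1.
Proof.
move=> h1 h2; have [e1 e2] := col_split i h1 h2.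
set T := \sum_(i.+2 <= l < N.+1) _ in e1 e2.
have hq : 0 < (N - i + 1)%N%:Z by lia.
have hr : 0 < (N - i)%N%:Z by lia.
have [a1 a2 a3 a4] := mcb _ _ _ _ hr e2.
have hmu := @inP_mono _ _ _ hP i i.+1 h1 (leqnSn i) h2.
rewrite e1; set v := c i.+1 in a1 a2 a3 a4 *.
case: (ltP v m%:Z) => hv.
  have : ceil_div (mu i + (v + T)) (N - i + 1)%N%:Z <= v + (mu i - mu i.+1).
    apply: cdiv_le => //; have := a3 hv; nia.
  lia.
lia.
Qed.

Lemma col_rest i : (1 <= i <= N)%N -> mu i - c i <= (m * (N - i))%N%:Z.
Proof.
move=> hi; have [h0 hle] := andP (col_nn i hi).
have e := @col_rec m N mu i hi.
set T := \sum_(i.+1 <= l < N.+1) _ in e.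
have hT0 : 0 <= T.
  apply: sum_ge0_nat => l hl; have := col_nn l; lia.
have hq : 0 < (N - i + 1)%N%:Z by lia.
have [a1 a2 a3 a4] := mcb _ _ _ _ hq e.
have hmu : mu i <= (m * (N - i + 1))%N%:Z by case: hP => _ _ h3; apply: h3.
case: (ltP (c i) m%:Z) => hv.
  have := a3 hv. set v := c i in hv h0 hle *. nia.
lia.
Qed.

End Col.

Lemma inP_drop m N mu : inP m N.+1 mu -> inP m N (fun l => mu l - kk m N.+1 mu l N.+1).
Proof.
move=> hP; split.
- move=> i hi hiN; have := @col_lip m N.+1 mu hP i hi (leqW hiN); lia.
- move=> i hi; have := @col_nn m N.+1 mu hP i; lia.
- move=> i hi; have -> : (N - i + 1 = N.+1 - i)%N by lia.
  have := @col_rest m N.+1 mu hP i; lia.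
Qed.

Lemma col_mono_far m N mu : inP m N mu ->
  forall i j, (1 <= i)%N -> (i <= j)%N -> (j <= N)%N -> kk m N mu j N <= kk m N mu i N.
Proof.
move=> hP i; elim=> [|j IH] hi hij hjN; first lia.
case: (ltnP i j.+1) => h.
  apply: le_trans (@col_mono m N mu hP j _ _) (IH _ _ _); lia.
have -> : j.+1 = i by lia. by [].
Qed.

Lemma sum_bnd (lo hi : nat) (f g : nat -> int) (d : int) :
  (forall t, (lo <= t < hi)%N -> 0 <= f t - g t - d <= 1) ->
  0 <= \sum_(lo <= t < hi) f t - \sum_(lo <= t < hi) g t - d * (hi - lo)%N%:Z <= (hi - lo)%N%:Z.
Proof.
move=> H.
have e : \sum_(lo <= t < hi) (f t - g t - d) =
   \sum_(lo <= t < hi) f t - \sum_(lo <= t < hi) g t - d * (hi - lo)%N%:Z.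
  rewrite !sumrB sumr_const_nat.
  set s1 := \sum_(lo <= i < hi) f i. set s2 := \sum_(lo <= i < hi) g i. lia.
rewrite -e; apply/andP; split.
  by apply: sum_ge0_nat => t /H /andP[].
have := @sum_le_const lo hi (fun t => f t - g t - d) 1 (fun t ht => proj2 (andP (H t ht))).
lia.
Qed.

Section Main.
Variables (m N : nat) (lam : nat -> int).
Hypothesis hP : inP m N.+2 lam.
Local Notation a l := (kk m N.+2 lam l N.+2).
Local Notation b l := (kk m N.+2 lam l N.+1).
Local Notation lam2 := (fun l => lam l - kk m N.+2 lam l N.+2).
Local Notation lam4 := (fun l => lam l - kk m N.+2 lam l N.+1).
Local Notation a' l := (kk m N.+1 lam4 l N.+1).

Lemma hP2 : inP m N.+1 lam2.
Proof. exact: inP_drop. Qed.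

Lemma hb2 l : (1 <= l <= N.+1)%N -> kk m N.+1 lam2 l N.+1 = b l.
Proof. move=> /andP[h1 h2]; exact: kk_drop. Qed.

Lemma hP4 : inP m N.+1 lam4.
Proof.
split.
- move=> i hi hiN.
  have := @col_lip m N.+1 lam2 hP2 i hi hiN.
  rewrite !hb2; [|lia|lia].
  have := @col_mono m N.+2 lam hP i hi (leqW hiN). lia.
- move=> i hi; have := @col_nn m N.+1 lam2 hP2 i hi; rewrite hb2 //.
  have := @col_nn m N.+2 lam hP i ltac:(lia). lia.
- move=> i hi; have := @col_rest m N.+1 lam2 hP2 i hi; rewrite hb2 //.
  have := @col_le_m m N.+2 lam i.
  have -> : (m * (N.+1 - i + 1) = m * (N.+1 - i) + m)%N by rewrite mulnDr muln1.
  lia.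
Qed.

Lemma Ra l : (1 <= l <= N.+1)%N ->
  a l = Order.min m%:Z (ceil_div (lam l + (\sum_(l.+1 <= t < N.+2) a t + a N.+2))
          ((N.+1 - l + 1)%N%:Z + 1)).
Proof.
move=> hl; rewrite [LHS]col_rec; last lia.
rewrite (big_nat_recr N.+2); last lia.
congr (Order.min _ (ceil_div _ _)); lia.
Qed.

Lemma Rb l : (1 <= l <= N.+1)%N ->
  b l = Order.min m%:Z (ceil_div (lam l - a l + \sum_(l.+1 <= t < N.+2) b t)
          (N.+1 - l + 1)%N%:Z).
Proof.
move=> /andP[h1 h2]; rewrite [LHS]kk_rec //.
by rewrite big_nat1.
Qed.

Lemma Ra' l : (1 <= l <= N.+1)%N ->
  a' l = Order.min m%:Z (ceil_div (lam l - b l + \sum_(l.+1 <= t < N.+2) a' t)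
          (N.+1 - l + 1)%N%:Z).
Proof. move=> hl; by rewrite [LHS]col_rec. Qed.

Lemma main_col : forall l, (1 <= l <= N.+1)%N ->
  [/\ a' l = a l, (a l < m%:Z -> 0 <= a l - b l - a N.+2 <= 1) & b l <= a l].
Proof.
apply: down_ind => l hl IH.
have ea := Ra l hl. have eb := Rb l hl. have ea' := Ra' l hl.
set p := (N.+1 - l + 1)%N%:Z in ea eb ea'.
have hp : 0 < p by rewrite /p; lia.
have hp1 : 0 < p + 1 by lia.
have hA' : \sum_(l.+1 <= t < N.+2) a' t = \sum_(l.+1 <= t < N.+2) a t.
  apply: eq_big_nat => t ht; by case: (IH t ht).
rewrite hA' in ea'.
set A := \sum_(l.+1 <= t < N.+2) a t in ea ea'.
set B := \sum_(l.+1 <= t < N.+2) b t in eb.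
set d := a N.+2 in ea *.
have hBA : B <= A.
  apply: sum_le_sum => t ht; by case: (IH t ht).
have hd0 : 0 <= d by have := @col_nn m N.+2 lam hP N.+2 ltac:(lia); lia.
have hcnt : (N.+2 - l.+1)%N%:Z = p - 1 by rewrite /p; lia.
have [a1 a2 a3 a4] := mcb _ _ _ _ hp1 ea.
have [b1 b2 b3 b4] := mcb _ _ _ _ hp eb.
have [c1 c2 c3 c4] := mcb _ _ _ _ hp ea'.
have hal := @col_le_m m N.+2 lam l.
have hE : (forall t, (l.+1 <= t < N.+2)%N -> a t < m%:Z) -> 0 <= A - B - (p - 1) * d <= p - 1.
  move=> H.
  have hs : 0 <= A - B - d * (N.+2 - l.+1)%N%:Z <= (N.+2 - l.+1)%N%:Z.
    apply: sum_bnd => t ht. by case: (IH t ht) => _ /(_ (H t ht)).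
  rewrite hcnt in hs; lia.
set al := a l in ea a1 a2 a3 a4 hal eb b1 b2 b3 b4 *.
set bl := b l in eb b1 b2 b3 b4 *.
case: (ltP al m%:Z) => hlt.
- have hba : bl <= al.
    have := a3 hlt => ha.
    have : ceil_div (lam l - al + B) p <= al by apply: cdiv_le => //; nia.
    lia.
  have hE' := hE (fun t ht => le_lt_trans (@col_mono_far m N.+2 lam hP l t ltac:(lia) ltac:(lia) ltac:(lia)) hlt).
  have := b3 ltac:(lia) => hb3.
  have := a3 hlt => ha3.
  have [/andP[e0 e1] f1 f2] := @arith_unc p al (lam l) A B bl d hp hE' (ltac:(apply/andP; split; lia)) (ltac:(apply/andP; split; lia)).
  split; [|by move=> _; lia|by []].
  rewrite ea'; apply: mceq => //; right; split => //; lia.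
- have hal' : al = m%:Z by lia.
  split; [|lia|lia].
  case: (boolP ((l < N.+1)%N && (a l.+1 == m%:Z))) => [/andP[hl1 /eqP ham]|hno].
  + have := @col_mono m N.+1 lam4 hP4 l ltac:(lia) hl1.
    case: (IH l.+1 ltac:(lia)) => -> _ _.
    have := @col_le_m m N.+1 lam4 l. lia.
  + have hE' : 0 <= A - B - (p - 1) * d <= p - 1.
      apply: hE => t ht.
      have h1 : (l < N.+1)%N by lia.
      have := @col_mono_far m N.+2 lam hP l.+1 t ltac:(lia) ltac:(lia) ltac:(lia).
      have := @col_le_m m N.+2 lam l.+1.
      move: hno; rewrite h1 /= => hno.
      have : a l.+1 != m%:Z by [].
      move=> /eqP; lia.
    have a4' := a4 hal'.
    have hcap := @arith_capped p m%:Z (lam l) A B bl d hp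
      ltac:(lia) ltac:(lia) ltac:(lia).
    rewrite ea'; apply: mceq => //; left; lia.
Qed.

End Main.

Lemma k4_low m N lam (hP : inP m N.+2 lam) :
  forall i j, (1 <= i)%N -> (i <= j)%N -> (j <= N.+1)%N -> (j <= N)%N ->
  kk m N.+1 (fun l => lam l - kk m N.+2 lam l N.+1) i j = kk m N.+2 lam i j.
Proof.
apply: kk_ind => i j h1 h2 h3 IH hj.
rewrite kk_rec // [RHS]kk_rec //; last lia.
rewrite (big_nat_recr N.+1) /=; last lia.
rewrite (big_nat_recr N.+2) /=; last lia.
rewrite (big_nat_recr N.+1) /=; last lia.
case: (@main_col m N lam hP i ltac:(lia)) => -> _ _.
have -> : \sum_(j.+1 <= l < N.+1) kk m N.+1 (fun l => lam l - kk m N.+2 lam l N.+1) i l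
   = \sum_(j.+1 <= l < N.+1) kk m N.+2 lam i l.
  apply: eq_big_nat => l hl; apply: IH; lia.
have -> : \sum_(i.+1 <= l < j.+1) kk m N.+1 (fun l => lam l - kk m N.+2 lam l N.+1) l j
   = \sum_(i.+1 <= l < j.+1) kk m N.+2 lam l j.
  apply: eq_big_nat => l hl; apply: IH; lia.
congr (Order.min _ (ceil_div _ _)).
set s1 := \sum_(j.+1 <= l < N.+1) _.
set s2 := \sum_(i.+1 <= l < j.+1) _.
set x := kk m N.+2 lam i N.+1. set y := kk m N.+2 lam i N.+2.
lia.
Qed.

Theorem lemma4p5 (n m : nat) (lam : nat -> int) :
  (2 <= n)%N -> (0 < m)%N -> inP m n lam ->
  let k := kk m n lam in
  let lam1 := fun i : nat => lam i.+1 in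
  let lam2 := fun i : nat => lam i - k i n in
  let lam3 := fun i : nat => lam2 i - k i (n - 1)%N in
  let lam4 := fun i : nat => lam i - k i (n - 1)%N in
  let k1 := kk m (n - 1) lam1 in
  let k2 := kk m (n - 1) lam2 in
  let k3 := kk m (n - 2) lam3 in
  let k4 := kk m (n - 1) lam4 in
  [/\ inP m (n - 1) lam1, inP m (n - 1) lam2, inP m (n - 1) lam4 &
      inP m (n - 2) lam3] /\
  [/\
      (forall i j : nat, (1 <= i <= j)%N -> (j <= n - 1)%N -> k1 i j = k i.+1 j.+1),
      (forall i j : nat, (1 <= i <= j)%N -> (j <= n - 1)%N -> k2 i j = k i j),
      (forall i j : nat, (1 <= i <= j)%N -> (j <= n - 2)%N -> k3 i j = k i j),
      (forall i j : nat, (1 <= i <= j)%N -> (j <= n - 2)%N -> k3 i j = k4 i j) &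
      (forall i j : nat, (1 <= i <= j)%N -> (j <= n - 1)%N ->
         k4 i j = if j == (n - 1)%N then k i j.+1 else k i j)].
Proof.
case: n => [|[|N]] // _ hm hP.
rewrite !subSS !subn0.
cbv zeta.
have hP2 := @inP_drop _ _ _ hP.
have hb2 : forall l, (1 <= l <= N.+1)%N ->
    kk m N.+1 (fun i => lam i - kk m N.+2 lam i N.+2) l N.+1 = kk m N.+2 lam l N.+1.
  move=> l /andP[h1 h2]; exact: kk_drop.
have hk3 : forall i j, (1 <= i <= j)%N -> (j <= N)%N ->
    kk m N (fun i => lam i - kk m N.+2 lam i N.+2 - kk m N.+2 lam i N.+1) i j = kk m N.+2 lam i j.
  move=> i j /andP[h1 h2] h3.
  rewrite (@kk_ext m N _ (fun l => (lam l - kk m N.+2 lam l N.+2)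
       - kk m N.+1 (fun i => lam i - kk m N.+2 lam i N.+2) l N.+1)) //; last first.
    by move=> l hl; rewrite hb2 //; lia.
  rewrite kk_drop // kk_drop //; lia.
have hk4 : forall i j, (1 <= i <= j)%N -> (j <= N.+1)%N ->
    kk m N.+1 (fun i => lam i - kk m N.+2 lam i N.+1) i j =
    if j == N.+1 then kk m N.+2 lam i j.+1 else kk m N.+2 lam i j.
  move=> i j /andP[h1 h2] h3.
  case: eqP => [->|hne].
    by case: (@main_col m N lam hP i ltac:(lia)).
  apply: k4_low => //; lia.
split; split.
- split.
  + move=> i hi hiN; case: hP => h _ _; apply: h; lia.
  + move=> i hi; case: hP => _ h _; apply: h; lia.
  + move=> i hi; case: hP => _ _ h.
    have -> : (N.+1 - i + 1 = N.+2 - i.+1 + 1)%N by lia.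
    apply: h; lia.
- exact: hP2.
- exact: (@hP4 m N lam hP).
- apply: (@inP_ext m N _ _ _ (@inP_drop _ _ _ hP2)) => l hl; rewrite hb2 //; lia.
- move=> i j /andP[h1 h2] h3; exact: kk_shift.
- move=> i j /andP[h1 h2] h3; exact: kk_drop.
- exact: hk3.
- move=> i j hij h3; rewrite hk3 // hk4; last lia.
    by have -> : (j == N.+1) = false by apply/eqP; lia.
  by [].
- exact: hk4.
Qed.
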